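(* Consider a generic device in the steady state of the frame-slotted system described in the context, with $M\ge 1$ slots per frame, harvesting probability $\eta\in[0,1]$, maximum degree $\ell_{\max}$, conditional degree distribution $\{\Lambda_{\ell,b}\}$ and steady-state initial battery distribution $\phi=(\phi_0,\dots,\phi_E)$. Then the packet loss rate $P_e$ satisfies $P_e\ge \underline{P_e}$, where $$\underline{P_e}=\phi_0\left(\sum_{y=1}^{M}\eta(1-\eta)^{y-1}\sum_{\ell=0}^{\ell_{\max}}\Lambda_{\ell,0}\,\frac{(y-1)!\,(M-\ell)!}{(y-\ell-1)!\,M!}+(1-\eta)^M\right),$$ with the convention that the factor $\frac{(y-1)!}{(y-\ell-1)!}$ equals $0$ whenever $\ell>y-1$ (so the degree-$0$ term has ratio equal to $1$).
   Context: Time is slotted and grouped into frames of $M$ slots. Each device has a battery of capacity $E$ energy units; each packet (replica) transmission consumes one energy unit. In each slot, independently across slots and devices, a device harvests one energy unit with probability $\eta$ (harvesting pauses when the battery is full); an energy unit harvested in slot $y$ of a frame can be used for a transmission in slot $y$ or later. The initial battery level $B\in\{0,\dots,E\}$ of a device is its battery level at the beginning of a frame; at steady state $\mathbb{P}[B=b]=\phi_b$, and whether a device is active (has an update to send) in a frame is independent of $B$. An active device with initial battery level $b$ draws a degree $L$ with $\mathbb{P}[L=\ell\mid B=b]=\Lambda_{\ell,b}$, $\ell\in\{0,\dots,\ell_{\max}\}$, and then chooses $L$ distinct slots of the frame uniformly at random without replacement (independently of the harvesting process) as the intended positions of $L$ identical replicas of its update. A replica is actually transmitted only if the device has at least one energy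 unit available in that slot; otherwise it is dropped. Degree $0$ means the update is discarded. The packet loss rate $P_e$ is the steady-state probability that the update of an active device in a frame is not successfully decoded by the receiver (in particular, it is lost if the degree is $0$ or if all its intended replicas are dropped). *)

(* Defs.v *)
From HB Require Import structures.
From mathcomp Require Import all_boot all_order all_algebra.
Set Implicit Arguments. Unset Strict Implicit. Unset Printing Implicit Defensive.
Import Order.TTheory GRing.Theory Num.Theory.
Local Open Scope ring_scope.

Definition harvest_step (E : nat) (h : bool) (e : nat) : nat :=
  if h && (e < E)%N then e.+1 else e.

(* One slot: state = (battery level, number of replicas actually transmitted).
   The energy harvested in the slot is usable in the same slot. *)
Definition slot_step (E : nat) (tx h : bool) (st : nat * nat) : nat * nat :=
  let e := harvest_step E h st.1 in
  if tx && (0 < e)%N then (e.-1, st.2.+1) else (e, st.2).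

Definition run_frame (E M : nat) (b : nat) (S : {set 'I_M})
    (h : {ffun 'I_M -> bool}) : nat * nat :=
  foldl (fun st (y : 'I_M) => slot_step E (y \in S) (h y) st) (b, 0%N)
        (enum 'I_M).

Definition harvest_prob (R : pzRingType) (M : nat) (eta : R)
    (h : {ffun 'I_M -> bool}) : R :=
  \prod_(y < M) (if h y then eta else 1 - eta).

(* Probability that an active device with initial battery b picks exactly the
   slot set S: degree L = #|S| with prob. Lam L b, then a uniform L-subset. *)
Definition slots_prob (R : fieldType) (M : nat) (Lam : nat -> nat -> R)
    (b : nat) (S : {set 'I_M}) : R :=
  Lam #|S| b / ('C(M, #|S|))%:R.

(* Packet loss rate of an active device: loss b S h is the (conditional)
   probability that the update is not decoded given the device's local
   outcome (initial battery b, intended slots S, harvesting pattern h); it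
   accounts for everything else (other devices, receiver). *)
Definition packet_loss_rate (R : fieldType) (E M : nat) (phi : nat -> R)
    (Lam : nat -> nat -> R) (eta : R)
    (loss : nat -> {set 'I_M} -> {ffun 'I_M -> bool} -> R) : R :=
  \sum_(b < E.+1) \sum_(S : {set 'I_M}) \sum_(h : {ffun 'I_M -> bool})
     phi b * slots_prob Lam b S * harvest_prob eta h * loss b S h.

(* Frame-to-frame transition kernel of the initial battery level: the device
   is active with probability alpha (independently of its battery); an
   inactive device intends no transmission (S = set0). *)
Definition frame_kernel (R : fieldType) (E M : nat) (alpha : R)
    (Lam : nat -> nat -> R) (eta : R) (b b' : nat) : R :=
  (1 - alpha) * (\sum_(h : {ffun 'I_M -> bool})
                   harvest_prob eta h * ((@run_frame E M b set0 h).1 == b')%:R)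
  + alpha * (\sum_(S : {set 'I_M}) \sum_(h : {ffun 'I_M -> bool})
       slots_prob Lam b S * harvest_prob eta h
       * ((@run_frame E M b S h).1 == b')%:R).

(* The lower bound of the paper; (y-1)^_l is the falling factorial
   (y-1)!/(y-l-1)!, which is 0 when l > y-1. *)
Definition Pe_lower (R : fieldType) (M lmax : nat) (phi : nat -> R)
    (Lam : nat -> nat -> R) (eta : R) : R :=
  phi 0%N * (\sum_(1 <= y < M.+1)
      eta * (1 - eta) ^+ (y - 1) *
      \sum_(l < lmax.+1) Lam l 0%N * ((y - 1) ^_ l)%:R * ((M - l)`!)%:R
                          / (M`!)%:R
    + (1 - eta) ^+ M).

(* Main.v *)
Require Import Defs.
From HB Require Import structures.
From mathcomp Require Import all_boot all_order all_algebra.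
From mathcomp Require Import ring.
Import Order.TTheory GRing.Theory Num.Theory.
Local Open Scope ring_scope.
Lemma run_gen (E M : nat) (S : {set 'I_M}) (h : {ffun 'I_M -> bool}) :
  (forall i : 'I_M, h i -> forall j, j \in S -> (j < i)%N) ->
  forall (s : seq 'I_M) e, sorted ltn (map val s) ->
  (e = 0%N \/ forall y, y \in s -> y \notin S) ->
  (foldl (fun st (y : 'I_M) => slot_step E (y \in S) (h y) st) (e, 0%N) s).2 = 0%N.
Proof.
move=> HI; elim=> [|x s IH] e //= Hs He.
have Hs' : sorted ltn (map val s) by apply: (path_sorted Hs).
have Hall : all (ltn x) (map val s) by apply: (order_path_min ltn_trans Hs).
rewrite /slot_step /=.
case xS: (x \in S).
- case: He => [He|He]; last by rewrite (negbTE (He x (mem_head _ _))) in xS.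
  subst e.
  have hx : h x = false.
    by apply/negbTE/negP => hx; have := HI x hx x xS; rewrite ltnn.
  rewrite /harvest_step hx /=.
  by apply: IH => //; left.
- rewrite andFb /=; apply: IH => //.
  case hx: (h x).
  + right => y ys; apply/negP => yS.
    have := HI x hx y yS.
    move/allP: Hall => /(_ (val y) (map_f _ ys)) /=.
    by move=> Hxy /(ltn_trans Hxy); rewrite ltnn.
  + rewrite /= ?/harvest_step /=.
    case: He => [->|He]; [by left | right => y ys; apply: He; by rewrite in_cons ys orbT].
Qed.

Lemma run_noTx (E M : nat) (S : {set 'I_M}) (h : {ffun 'I_M -> bool}) :
  (forall i : 'I_M, h i -> forall j, j \in S -> (j < i)%N) ->
  (@run_frame E M 0 S h).2 = 0%N.
Proof.
move=> HI; rewrite /run_frame; apply: run_gen => //; last by left.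
by rewrite val_enum_ord iota_ltn_sorted.
Qed.
Lemma prod_bool (R : comPzSemiRingType) (I : finType) (P : I -> bool) :
  \prod_(i : I) ((P i)%:R : R) = ([forall i, P i])%:R.
Proof.
case: (boolP [forall i, P i]) => [/forallP H|].
  by rewrite big1 // => i _; rewrite H.
rewrite negb_forall => /existsP [i Hi].
by rewrite (bigD1 i) //= (negbTE Hi) mul0r.
Qed.

Lemma sum_bool (R : comPzSemiRingType) (I : finType) (P : I -> bool) :
  \sum_(i : I) ((P i)%:R : R) = #|[set i | P i]|%:R.
Proof.
rewrite (eq_bigr (fun i => if P i then 1 else 0)); last by move=> i _; case: (P i).
by rewrite -big_mkcond sumr_const cardsE.
Qed.

Definition Ay M (y : 'I_M) (h : {ffun 'I_M -> bool}) : bool :=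
  [forall i : 'I_M, (i < y)%N ==> ~~ h i] && h y.
Definition Zh M (h : {ffun 'I_M -> bool}) : bool := [forall i : 'I_M, ~~ h i].
Arguments Ay {M}. Arguments Zh {M}.

Lemma prod_G (R : comPzRingType) (M : nat) (y : 'I_M) (a b : R) :
  \prod_(i < M) (if (i < y)%N then a else if (i == y :> nat) then b else 1)
  = a ^+ y * b.
Proof.
rewrite -(big_mkord xpredT (fun n => if (n < y)%N then a else if n == y then b else 1)).
rewrite (big_cat_nat _ (n := y)) //=; last by apply: ltnW.
rewrite (eq_big_nat _ _ (F2 := fun _ => a)); last by move=> n /andP [_ ->].
rewrite prodr_const_nat subn0 big_ltn // ltnn eqxx.
rewrite big1_seq ?mulr1 // => n /andP [_]; rewrite mem_index_iota => /andP [Hn _].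
by rewrite ltnNge (ltnW Hn) /= gtn_eqF.
Qed.

Lemma hp_Ay (R : comPzRingType) (M : nat) (eta : R) (y : 'I_M) :
  \sum_(h : {ffun 'I_M -> bool}) harvest_prob eta h * (Ay y h)%:R
  = (1 - eta) ^+ y * eta.
Proof.
pose c (i : 'I_M) (b : bool) := if (i < y)%N then ~~ b else if i == y then b else true.
have E1 : forall h : {ffun 'I_M -> bool}, Ay y h = [forall i, c i (h i)].
  move=> h; apply/andP/forallP => [[/forallP H1 H2] i | H].
  - rewrite /c; case: ifP => iy; first by apply: (implyP (H1 i)).
    by case: eqP => // ->.
  - split; last by have := H y; rewrite /c ltnn eqxx.
    apply/forallP=> i; apply/implyP=> iy; by have := H i; rewrite /c iy.
rewrite (eq_bigr (fun h : {ffun 'I_M -> bool} => \prod_i ((if h i then eta else 1 - eta) * (c i (h i))%:R))); last first.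
  by move=> h _; rewrite big_split /= prod_bool E1.
rewrite -(bigA_distr_bigA (fun i b => (if b then eta else 1 - eta) * (c i b)%:R)) /=.
rewrite -(@prod_G R M y (1 - eta) eta); apply: eq_bigr => i _.
rewrite big_bool /= /c; case: ifP => _ /=; first by rewrite mulr0 mulr1 add0r.
rewrite val_eqE; case: (i == y); rewrite /= ?(mulr1n, mulr0n, mulr1, mulr0, addr0, add0r) //.
by rewrite addrC subrK.
Qed.

Lemma hp_Z (R : comPzRingType) (M : nat) (eta : R) :
  \sum_(h : {ffun 'I_M -> bool}) harvest_prob eta h * (Zh h)%:R
  = (1 - eta) ^+ M.
Proof.
rewrite (eq_bigr (fun h : {ffun 'I_M -> bool} => \prod_i ((if h i then eta else 1 - eta) * (~~ h i)%:R))); last first.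
  by move=> h _; rewrite big_split /= prod_bool.
rewrite -(bigA_distr_bigA (fun i b => (if b then eta else 1 - eta) * (~~ b)%:R)) /=.
rewrite (eq_bigr (fun _ => 1 - eta)); last by move=> i _; rewrite big_bool /= mulr0 mulr1 add0r.
by rewrite prodr_const card_ord.
Qed.

Lemma partition1 (R : comPzSemiRingType) (M : nat) (h : {ffun 'I_M -> bool}) :
  (Zh h)%:R + \sum_(y < M) (Ay y h)%:R = 1 :> R.
Proof.
case: (boolP (Zh h)) => Hz.
  rewrite big1 ?addr0 // => y _; move/forallP: Hz => /(_ y) /negbTE hy.
  by rewrite /Ay hy andbF.
move: Hz; rewrite /Zh negb_forall => /existsP [i0]; rewrite negbK => h0.
case: (arg_minnP (fun i : 'I_M => val i) h0) => y0 hy0 Hmin.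
rewrite add0r (bigD1 y0) //=.
have -> : Ay y0 h.
  rewrite /Ay hy0 andbT; apply/forallP => i; apply/implyP => iy.
  by apply/negP => hi; have := Hmin i hi; rewrite leqNgt iy.
rewrite big1 ?addr0 // => y ny; case: (boolP (Ay y h)) => // /andP [/forallP H1 hy].
have l1 := Hmin y hy.
have l2 : (y <= y0)%N.
  by rewrite leqNgt; apply/negP => Hlt; have := implyP (H1 y0) Hlt; rewrite hy0.
have Ey : y = y0 by apply: val_inj; apply/eqP; rewrite eqn_leq l1 l2.
by rewrite Ey eqxx in ny.
Qed.

Lemma card_lt (M : nat) (y : 'I_M) : #|[set i : 'I_M | (i < y)%N]| = y.
Proof.
have Hy : (y <= M)%N by apply: ltnW.
have -> : [set i : 'I_M | (i < y)%N] = [set widen_ord Hy j | j in 'I_y].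
  apply/setP => i; rewrite inE; apply/idP/imsetP => [iy | [j _ ->]].
  - by exists (Ordinal iy) => //; apply: val_inj.
  - by rewrite /= ltn_ord.
rewrite card_imset ?card_ord // => a b E; apply: val_inj; exact: (congr1 val E).
Qed.
Lemma G_sub (R : fieldType) (M : nat) (Lam : nat -> nat -> R) (A : {set 'I_M}) :
  \sum_(S : {set 'I_M}) slots_prob Lam 0 S * (S \subset A)%:R
  = \sum_(l < M.+1) Lam l 0%N / ('C(M, l))%:R * ('C(#|A|, l))%:R.
Proof.
have E1 : forall S : {set 'I_M}, slots_prob Lam 0 S * (S \subset A)%:R
   = \sum_(l < M.+1) (Lam l 0%N / ('C(M, l))%:R) * ((S \subset A) && (#|S| == l))%:R.
  move=> S; have HS : (#|S| < M.+1)%N by rewrite ltnS; have := max_card (mem S); rewrite card_ord.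
  rewrite (bigD1 (Ordinal HS)) //= eqxx andbT big1 ?addr0 //.
  move=> l nl; rewrite (_ : (#|S| == l) = false) ?andbF ?mulr0 //.
  apply/negbTE; apply: contra nl => /eqP E; apply/eqP/val_inj => /=; exact: esym E.
rewrite (eq_bigr _ (fun S _ => E1 S)) exchange_big /=; apply: eq_bigr => l _.
by rewrite -mulr_sumr sum_bool -cards_draws.
Qed.

Lemma Gk (R : numFieldType) (M lmax k : nat) (Lam : nat -> nat -> R) :
  (lmax <= M)%N -> (forall l b, (lmax < l)%N -> Lam l b = 0) ->
  \sum_(l < M.+1) Lam l 0%N / ('C(M, l))%:R * ('C(k, l))%:R
  = \sum_(l < lmax.+1) Lam l 0%N * (k ^_ l)%:R * ((M - l)`!)%:R / (M`!)%:R.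
Proof.
move=> lmM LamZ.
rewrite (big_ord_widen M.+1 (fun l => Lam l 0%N * (k ^_ l)%:R * ((M - l)`!)%:R / (M`!)%:R)) //.
rewrite (bigID (fun l : 'I_M.+1 => (l < lmax.+1)%N)) /= [X in _ + X]big1 ?addr0; last first.
  by move=> l; rewrite -leqNgt => Hl; rewrite LamZ ?mul0r.
apply: eq_bigr => l _.
have Hl : (l <= M)%N by rewrite -ltnS ltn_ord.
rewrite -bin_ffact -(bin_fact Hl) !natrM.
have h1 : ('C(M, l))%:R != 0 :> R by rewrite pnatr_eq0 -lt0n bin_gt0.
have h2 : (l`!)%:R != 0 :> R by rewrite pnatr_eq0 -lt0n fact_gt0.
have h3 : ((M - l)`!)%:R != 0 :> R by rewrite pnatr_eq0 -lt0n fact_gt0.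
by field; rewrite ?h1 ?h2 ?h3 ?mulf_neq0.
Qed.

Theorem theorem1 (R : realFieldType) (E M lmax : nat) (eta alpha : R)
    (phi : nat -> R) (Lam : nat -> nat -> R)
    (loss : nat -> {set 'I_M} -> {ffun 'I_M -> bool} -> R) :
  (0 < M)%N ->
  (lmax <= M)%N ->
  0 <= eta <= 1 ->
  0 <= alpha <= 1 ->
  (forall b, 0 <= phi b) ->
  \sum_(b < E.+1) phi b = 1 ->
  (forall l b, 0 <= Lam l b) ->
  (forall l b, (lmax < l)%N -> Lam l b = 0) ->
  (forall b, (b <= E)%N -> \sum_(l < lmax.+1) Lam l b = 1) ->
  (forall b', (b' <= E)%N ->
     phi b' = \sum_(b < E.+1) phi b * frame_kernel E M alpha Lam eta b b') ->
  (forall b S h, 0 <= loss b S h <= 1) ->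
  (forall b S h, (@run_frame E M b S h).2 = 0%N -> loss b S h = 1) ->
  Pe_lower M lmax phi Lam eta <= @packet_loss_rate R E M phi Lam eta loss.
Proof.
move=> M0 lmM /andP[e0 e1] _ phi0 _ Lam0 LamZ LamS _ lossB loss1.
pose I (S : {set 'I_M}) (h : {ffun 'I_M -> bool}) :=
  [forall i : 'I_M, h i ==> [forall j in S, (j < i)%N]].
have sp0 : forall b (S : {set 'I_M}), 0 <= slots_prob Lam b S.
  by move=> b S; rewrite /slots_prob; apply: divr_ge0.
have hp0 : forall h : {ffun 'I_M -> bool}, 0 <= harvest_prob eta h.
  by move=> h; rewrite /harvest_prob; apply: prodr_ge0 => i _; case: (h i); rewrite ?subr_ge0.
have step1 : \sum_(S : {set 'I_M}) \sum_(h : {ffun 'I_M -> bool})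
      phi 0%N * slots_prob Lam 0 S * harvest_prob eta h * (I S h)%:R
    <= packet_loss_rate E phi Lam eta loss.
  apply: (le_trans (y := \sum_(S : {set 'I_M}) \sum_(h : {ffun 'I_M -> bool})
      phi 0%N * slots_prob Lam 0 S * harvest_prob eta h * loss 0%N S h)).
  - apply: ler_sum => S _; apply: ler_sum => h _; apply: ler_wpM2l.
      by apply: mulr_ge0; [apply: mulr_ge0 |]; [apply: phi0|apply: sp0|apply: hp0].
    case: (boolP (I S h)) => HI; last by case/andP: (lossB 0%N S h).
    rewrite loss1 //; apply: run_noTx => i hi j jS.
    by move/forallP: HI => /(_ i) /implyP /(_ hi) /forallP /(_ j) /implyP /(_ jS).
  - rewrite /packet_loss_rate (bigD1 ord0) //= lerDl sumr_ge0 // => b _.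
    apply: sumr_ge0 => S _; apply: sumr_ge0 => h _.
    apply: mulr_ge0; last by case/andP: (lossB b S h).
    by apply: mulr_ge0; [apply: mulr_ge0 |]; [apply: phi0|apply: sp0|apply: hp0].
apply: le_trans step1; rewrite le_eqVlt; apply/orP; left; apply/eqP.
pose G (A : {set 'I_M}) := \sum_(S : {set 'I_M}) slots_prob Lam 0 S * (S \subset A)%:R.
have L1 : \sum_(S : {set 'I_M}) \sum_(h : {ffun 'I_M -> bool})
      phi 0%N * slots_prob Lam 0 S * harvest_prob eta h * (I S h)%:R
   = phi 0%N * \sum_(h : {ffun 'I_M -> bool}) harvest_prob eta h *
        \sum_(S : {set 'I_M}) slots_prob Lam 0 S * (I S h)%:R.
  rewrite exchange_big mulr_sumr; apply: eq_bigr => h _.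
  rewrite mulr_sumr mulr_sumr; apply: eq_bigr => S _; ring.
have L2 : forall h : {ffun 'I_M -> bool},
    harvest_prob eta h * \sum_(S : {set 'I_M}) slots_prob Lam 0 S * (I S h)%:R
  = harvest_prob eta h * (Zh h)%:R * G setT
    + \sum_(y < M) harvest_prob eta h * (Ay y h)%:R * G [set i : 'I_M | (i < y)%N].
  move=> h.
  transitivity (harvest_prob eta h * (\sum_(S : {set 'I_M}) slots_prob Lam 0 S * (I S h)%:R)
     * ((Zh h)%:R + \sum_(y < M) (Ay y h)%:R)); first by rewrite (partition1 R M h) mulr1.
  rewrite mulrDr [X in _ + X]mulr_sumr; congr (_ + _).
  - case: (boolP (Zh h)) => Hz; last by rewrite !mulr0 mul0r.
    rewrite mulr1 mulr1; congr (_ * _); apply: eq_bigr => S _; rewrite subsetT.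
    suff HI : I S h by rewrite HI.
    apply/forallP => i; apply/implyP => hi.
    by move/forallP: Hz => /(_ i); rewrite hi.
  - apply: eq_bigr => y _.
    case: (boolP (Ay y h)) => Hy; last by rewrite !mulr0 mul0r.
    rewrite mulr1 mulr1; congr (_ * _); apply: eq_bigr => S _.
    congr (_ * _%:R); case/andP: Hy => /forallP H1 hy.
    congr (nat_of_bool _); apply/idP/idP => [HI | Hsub].
    + apply/subsetP => j jS; rewrite inE.
      by move/forallP: HI => /(_ y) /implyP /(_ hy) /forallP /(_ j) /implyP; apply.
    + apply/forallP => i; apply/implyP => hi; apply/forallP => j; apply/implyP => jS.
      have := subsetP Hsub j jS; rewrite inE => jy; apply: leq_trans jy _.
      by rewrite leqNgt; apply/negP => iy; have := implyP (H1 i) iy; rewrite hi.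
rewrite L1 (eq_bigr _ (fun h _ => L2 h)) big_split /= exchange_big /=.
rewrite -mulr_suml hp_Z.
rewrite (eq_bigr (fun y : 'I_M => (1 - eta) ^+ y * eta * G [set i : 'I_M | (i < y)%N])); last first.
  by move=> y _; rewrite -mulr_suml hp_Ay.
have GT : G setT = 1.
  rewrite /G G_sub cardsT card_ord (@Gk R M lmax _ Lam lmM LamZ) -[RHS](LamS 0%N) //.
  apply: eq_bigr => l _.
  have Hl : (l <= M)%N by apply: leq_trans lmM; rewrite -ltnS ltn_ord.
  rewrite -[Lam l 0%N * _ * _]mulrA -natrM ffact_fact // mulfK //.
  by rewrite pnatr_eq0 -lt0n fact_gt0.
have Gy : forall y : 'I_M, G [set i : 'I_M | (i < y)%N]
   = \sum_(l < lmax.+1) Lam l 0%N * (y ^_ l)%:R * ((M - l)`!)%:R / (M`!)%:R.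
  by move=> y; rewrite /G G_sub card_lt (@Gk R M lmax _ Lam lmM LamZ).
rewrite GT mulr1 /Pe_lower big_add1 /= big_mkord addrC; congr (_ * (_ + _)).
apply: eq_bigr => y _; rewrite Gy subSS subn0; ring.
Qed.
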